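(* For all integers $k\ge 1$ and $t\ge 1$, $$B_0(k+1,2t+1)+B_1(k,2t)=B_1(k,2t-2k)+p_{de}(2t-k).$$
   Context: For a partition $\pi$, $s(\pi)$ is its smallest part. For $j\ge1$, $\mathrm{Spt}j_{do}(n)$ is the set of partitions $\pi$ of $n$ in which $s(\pi)$ occurs exactly $j$ times and the remaining parts (those larger than $s(\pi)$) are pairwise distinct and each has parity different from that of $s(\pi)$. $B_0(j,n)$ (resp. $B_1(j,n)$) is the number of $\pi\in\mathrm{Spt}j_{do}(n)$ whose number of parts greater than $s(\pi)$ is even (resp. odd); $B_0(j,n)=B_1(j,n)=0$ for $n\le 0$. $p_{de}(n)$ is the number of partitions of $n$ into distinct even parts, with $p_{de}(0)=1$ and $p_{de}(n)=0$ for $n<0$. *)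

(* Defs.v *)
From mathcomp Require Import all_boot all_order all_algebra.
Set Implicit Arguments. Unset Strict Implicit. Unset Printing Implicit Defensive.
Import Order.TTheory GRing.Theory Num.Theory.

(* A partition of n is encoded by its multiplicity function:
   m : {ffun 'I_n -> 'I_n.+1}, where m i is the number of times the part
   (i.+1) occurs (each multiplicity is at most n). *)
Definition mult (n : nat) := {ffun 'I_n -> 'I_n.+1}.

Definition is_partition (n : nat) (m : mult n) : bool :=
  (\sum_(i < n) i.+1 * m i)%N == n.

(* m is in Spt j_do(n), with smallest part s.+1 (index s), and the number of
   parts greater than the smallest part has parity b (b = false: even,
   b = true: odd). *)
Definition spt_do_par (n j : nat) (b : bool) (m : mult n) : bool :=
  [exists s : 'I_n,
    [&& (0 < m s)%N,
        [forall i : 'I_n, (i < s)%N ==> (m i == 0 :> nat)],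
        (m s == j :> nat),
        [forall i : 'I_n, (s < i)%N ==>
           ((m i <= 1)%N &&
            ((m i != 0 :> nat) ==> (odd i.+1 != odd s.+1)))]
      & odd (\sum_(i < n | (s < i)%N) m i) == b]].

Definition Bnat (b : bool) (j n : nat) : nat :=
  #|[pred m : mult n | is_partition m && spt_do_par j b m]|.

Definition B0 (j : nat) (z : int) : nat :=
  if (z <= 0)%R then 0%N else Bnat false j `|z|%N.
Definition B1 (j : nat) (z : int) : nat :=
  if (z <= 0)%R then 0%N else Bnat true j `|z|%N.

Definition pde_nat (n : nat) : nat :=
  #|[pred m : mult n | is_partition m &&
      [forall i : 'I_n, (m i <= 1)%N && ((m i != 0 :> nat) ==> ~~ odd i.+1)]]|.

(* p_de(0) = 1 (empty partition), p_de(n) = 0 for n < 0. *)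
Definition pde (z : int) : nat :=
  if (z < 0)%R then 0%N else pde_nat `|z|%N.

(* Main.v *)
Require Import Defs.
From mathcomp Require Import all_boot all_order all_algebra.
Import Order.TTheory GRing.Theory Num.Theory.
From mathcomp Require Import zify.

Module Aux.
Set Implicit Arguments. Unset Strict Implicit. Unset Printing Implicit Defensive.

Lemma bij_card (T1 T2 : finType) (P1 : pred T1) (P2 : pred T2) (f : T1 -> T2) :
  {in P1 &, injective f} -> (forall x, P1 x -> P2 (f x)) ->
  (forall y, P2 y -> exists2 x, P1 x & y = f x) -> #|[pred x | P1 x]| = #|[pred y | P2 y]|.
Proof.
move=> inj h1 h2; rewrite (eq_card (B := P1)) // -(card_in_imset inj); apply: eq_card => y.
rewrite inE.
apply/imsetP/idP => [[x Hx ->]|Hy]; first exact: h1.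
by have [x Hx ->] := h2 y Hy; exists x.
Qed.

Definition G (U : nat) (p : bool) (L c n : nat) (b : bool) : nat :=
 #|[pred E : {set 'I_U} | [forall i in E, (L < i) && (odd i == p)]
      && (c + \sum_(i in E) i.+1 == n) && (odd #|E| == b)]|.

Lemma G_gt U p L c n b : n < c -> G U p L c n b = 0.
Proof.
move=> h; apply: eq_card0 => E /=; rewrite !inE.
by case: eqP => [?|]; [lia | rewrite andbF andFb].
Qed.

Lemma odd_sum_set U (E : {set 'I_U}) p :
  (forall i, i \in E -> odd i = p) ->
  odd (\sum_(i in E) i.+1) = ~~ p && odd #|E|.
Proof.
move=> h; rewrite -sum1_card.
elim/big_rec2: _ => [|i x y Hi IH]; first by rewrite andbF.
by rewrite oddD IH oddS h // oddD /=; case: (p); case: (odd y).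
Qed.

Lemma G_par U p L c n b : odd n != (odd c (+) (~~ p && b)) -> G U p L c n b = 0.
Proof.
move=> h; apply: eq_card0 => E /=; rewrite !inE.
case Hf: [forall i in E, _] => //=.
case: eqP => //= Hs; apply/negP => /eqP Hb; move: h; rewrite -Hs oddD.
rewrite (@odd_sum_set _ _ p) ?Hb ?eqxx //.
by move=> i Hi; move/forallP: Hf => /(_ i); rewrite Hi /= => /andP[_ /eqP].
Qed.

Lemma G_shift U p L c d n b : G U p L (c + d) (n + d) b = G U p L c n b.
Proof.
apply: eq_card => E /=; rewrite !inE.
by rewrite addnAC eqn_add2r.
Qed.

Lemma elem_le U (E : {set 'I_U}) i : i \in E -> i.+1 <= \sum_(j in E) j.+1.
Proof. by move=> Hi; rewrite (big_setD1 _ Hi) /=; lia. Qed.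

Definition wid U (i : 'I_U) : 'I_U.+1 := widen_ord (leqnSn U) i.
Lemma wid_inj U : injective (@wid U).
Proof. by move=> i j /(congr1 val) /= /val_inj. Qed.

Lemma G_univ1 U p L c n b : n <= U -> G U p L c n b = G U.+1 p L c n b.
Proof.
move=> hn; rewrite /G.
have key : forall E : {set 'I_U},
  [forall i in [set wid i | i in E], (L < i) && (odd i == p)]
      && (c + \sum_(i in [set wid i | i in E]) i.+1 == n) && (odd #|[set wid i | i in E]| == b)
  = [forall i in E, (L < i) && (odd i == p)]
      && (c + \sum_(i in E) i.+1 == n) && (odd #|E| == b).
  move=> E; rewrite card_imset; last exact: wid_inj.
  rewrite big_imset /=; last by move=> x y _ _; apply: wid_inj.
  congr (_ && _ && _); apply/forallP/forallP => H i.
    by have := H (wid i); rewrite mem_imset //; apply: wid_inj.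
  by apply/implyP => /imsetP[j Hj ->] /=; have := H j; rewrite Hj.
apply: (@bij_card _ _ _ _ (fun E : {set 'I_U} => [set wid i | i in E])) => /=.
- by move=> E1 E2 _ _ /setP h; apply/setP => i; have := h (wid i); rewrite !mem_imset //; apply: wid_inj.
- by move=> E; rewrite key.
- move=> E' H; have := H; move=> /andP[/andP[Hf Hs] Hb].
  have hlt : forall i, i \in E' -> i < U.
    move=> i Hi; apply: leq_trans (elem_le Hi) (leq_trans _ hn); move/eqP: Hs => <-; exact: leq_addl.
  have HE : E' = [set wid i | i in [set i : 'I_U | wid i \in E']].
    apply/setP => i; apply/idP/imsetP => [Hi|[j]]; last by rewrite inE => Hj ->.
    have e : i = wid (Ordinal (hlt i Hi)) by apply: val_inj.
    by exists (Ordinal (hlt i Hi)); rewrite // inE -e.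
  by exists [set i : 'I_U | wid i \in E'] => //; rewrite -key -HE.
Qed.

Lemma G_univ U U' p L c n b : n <= U -> U <= U' -> G U p L c n b = G U' p L c n b.
Proof.
move=> hn hU; rewrite -(subnKC hU); elim: (U' - U) => [|d IH]; first by rewrite addn0.
by rewrite IH addnS G_univ1 //; apply: leq_trans hn (leq_addr _ _).
Qed.

Lemma G_move U U' p L c n b : n <= U -> n <= U' -> G U p L c n b = G U' p L c n b.
Proof.
move=> h1 h2; rewrite (@G_univ U (maxn U U')) ?leq_maxl // (@G_univ U' (maxn U U')) ?leq_maxr //.
Qed.

Definition Pb U p L c n b (E : {set 'I_U}) :=
  [forall i in E, (L < i) && (odd i == p)] && (c + \sum_(i in E) i.+1 == n) && (odd #|E| == b).

Lemma G_def U p L c n b : G U p L c n b = #|[pred E : {set 'I_U} | Pb p L c n b E]|.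
Proof. by []. Qed.


Lemma G_step U L c n b : ~~ odd L -> n <= U ->
  G U true L c n b = G U true L.+2 c n b + G U true L.+2 (c + L.+2) n (~~ b).
Proof.
move=> hL hn; case: (ltnP L.+1 U) => hLU; last first.
  rewrite (@G_gt _ _ _ (c + L.+2)). 2: lia.
  rewrite addn0 !G_def. apply: eq_card => E; rewrite !inE /Pb.
  congr (_ && _ && _); apply: eq_forallb => i.
  have h1 := ltn_ord i.
  have -> : (L < i) = false by lia.
  have -> : (L.+2 < i) = false by lia.
  by [].
pose x := Ordinal hLU.
have fa : forall E : {set 'I_U}, [forall i in E, (L < i) && (odd i == true)] && (x \notin E)
    = [forall i in E, (L.+2 < i) && (odd i == true)].
  move=> E; apply/idP/idP.
    move=> /andP[/forallP H Hx]; apply/forallP => i; apply/implyP => Hi.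
    have /andP[h1 h2] := implyP (H i) Hi; rewrite h2 andbT.
    have h3 : i != x by apply: contraNneq Hx => <-.
    have h4 : (i : nat) != L.+1 by [].
    have h5 : (i : nat) != L.+2.
      by apply/eqP => e; move: h2; rewrite e /= (negbTE hL).
    lia.
  move/forallP => H; apply/andP; split.
    apply/forallP => i; apply/implyP => Hi; have /andP[h1 h2] := implyP (H i) Hi.
    by rewrite h2 andbT; lia.
  by apply/negP => Hx; have := implyP (H x) Hx => /andP[] /=; lia.
have key : forall E : {set 'I_U}, x \notin E ->
    Pb true L c n b (x |: E) = Pb true L.+2 (c + L.+2) n (~~ b) E.
  move=> E Hx; rewrite /Pb big_setU1 //= cardsU1 Hx /= addnA.
  congr (_ && _ && _); last by case: b; case: (odd #|E|).
  rewrite -fa Hx andbT; apply/forallP/forallP => H i.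
    by apply/implyP => Hi; apply: (implyP (H i)); rewrite in_setU1 Hi orbT.
  apply/implyP; rewrite in_setU1 => /orP[/eqP ->|Hi]; first by rewrite /= hL ltnSn.
  exact: (implyP (H i)).
have e1 : G U true L c n b = #|[pred E : {set 'I_U} | Pb true L c n b E && (x \in E)]|
    + #|[pred E : {set 'I_U} | Pb true L c n b E && (x \notin E)]|.
  rewrite G_def -(cardID [pred E : {set 'I_U} | x \in E]).
  by congr addn; apply: eq_card => E; rewrite !inE // andbC.
rewrite e1 addnC; congr addn.
  rewrite G_def; apply: eq_card => E; rewrite !inE /Pb -fa.
  by case: (x \in E); rewrite /= ?andbT ?andbF.
have xn : forall E, Pb true L.+2 (c + L.+2) n (~~ b) E -> x \notin E.
  move=> E /andP[/andP[/forallP H _] _]; apply/negP => Hx.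
  by have := implyP (H x) Hx => /andP[] /=; lia.
rewrite G_def; symmetry.
apply: (@bij_card _ _ _ _ (fun E : {set 'I_U} => x |: E)) => /=.
- move=> E1 E2 H1 H2 e.
  by rewrite -(setU1K (xn _ H1)) -(setU1K (xn _ H2)) e.
- by move=> E HE; have Hx := xn _ HE; rewrite key // setU11 andbT.
- move=> E' /andP[HE Hx]; exists (E' :\ x); last by rewrite setD1K.
  by rewrite -key ?setD1K // !inE eqxx.
Qed.

Definition hm n j (s : 'I_n) (E : {set 'I_n}) : mult n :=
  [ffun i => inord (if i == s then j else (i \in E : nat))].

Lemma hm_val n j s E i : j <= n -> (@hm n j s E i : nat) = if i == s then j else (i \in E).
Proof.
move=> hj; rewrite ffunE inordK //; case: eqP => _; first lia.
by case: (i \in E) => /=; have := ltn_ord i; lia.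
Qed.

Lemma hm_sum n j (s : 'I_n) (E : {set 'I_n}) : (forall i, i \in E -> s < i) -> j <= n ->
  \sum_(i < n) i.+1 * hm j s E i = j * s.+1 + \sum_(i in E) i.+1.
Proof.
move=> Hsub hj.
have sE : s \notin E by apply/negP => /Hsub; rewrite ltnn.
rewrite (bigD1 s) //= hm_val // eqxx mulnC; congr addn.
rewrite [RHS]big_mkcond /= [RHS](bigD1 s) //= (negbTE sE) add0n.
apply: eq_bigr => i Hi; rewrite hm_val // (negbTE Hi).
by case: (i \in E); rewrite ?muln1 ?muln0.
Qed.

Lemma hm_cnt n j (s : 'I_n) (E : {set 'I_n}) : (forall i, i \in E -> s < i) -> j <= n ->
  \sum_(i < n | s < i) hm j s E i = #|E|.
Proof.
move=> Hsub hj.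
rewrite -sum1_card big_mkcond [RHS]big_mkcond; apply: eq_bigr => i _.
case: (ltnP s i) => h.
  rewrite hm_val // (_ : (i == s) = false); last by apply/eqP => e; rewrite e ltnn in h.
  by case: (i \in E).
case Hi: (i \in E) => //; have := Hsub i Hi; lia.
Qed.

Lemma Bnat_rep b j n : 0 < j ->
  Bnat b j n = \sum_(s < n) G n (~~ odd s) s (j * s.+1) n b.
Proof.
move=> hj0.
transitivity #|[pred q : 'I_n * {set 'I_n} | Pb (~~ odd q.1) q.1 (j * q.1.+1) n b q.2]|.
  rewrite /Bnat; symmetry.
  apply: (@bij_card _ _ _ _ (fun q : 'I_n * {set 'I_n} => hm j q.1 q.2)).
  - move=> [s1 E1] [s2 E2] /= H1 H2 e.
    move: H1 H2 => /andP[/andP[/forallP F1 /eqP S1] _] /andP[/andP[/forallP F2 /eqP S2] _].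
    simpl in F1, F2, S1, S2.
    have hj1 : j <= n by move: S1; nia.
    have e' : forall i, (if i == s1 then j else (i \in E1 : nat)) = (if i == s2 then j else (i \in E2 : nat)).
      by move=> i; rewrite -!hm_val // e.
    have es : s1 = s2.
      case: (ltngtP s1 s2) => h; last exact: val_inj.
        have := e' s1; rewrite eqxx (_ : (s1 == s2) = false); last by apply/eqP => q; rewrite q ltnn in h.
        case Hs: (s1 \in E2); last by move=> ?; exfalso; lia.
        by move=> _; have := implyP (F2 s1) Hs => /andP[? _]; exfalso; lia.
      have := e' s2; rewrite eqxx (_ : (s2 == s1) = false); last by apply/eqP => q; rewrite q ltnn in h.
      case Hs: (s2 \in E1); last by move=> ?; exfalso; lia.
      by move=> _; have := implyP (F1 s2) Hs => /andP[? _]; exfalso; lia.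
    subst s2; congr pair; apply/setP => i; have := e' i.
    case: eqP => [->|_]; last by case: (i \in E1); case: (i \in E2).
    case H1: (s1 \in E1); first by have := implyP (F1 s1) H1 => /andP[]; rewrite ltnn.
    case H2: (s1 \in E2); first by have := implyP (F2 s1) H2 => /andP[]; rewrite ltnn.
    by [].
  - move=> [s E] /= /andP[/andP[/forallP F /eqP S] /eqP Hb].
    simpl in F, S.
    have hj1 : j <= n by move: S; nia.
    have Hsub : forall i, i \in E -> s < i by move=> i Hi; have := implyP (F i) Hi => /andP[].
    apply/andP; split; first by rewrite /is_partition hm_sum // S.
    apply/existsP; exists s; apply/and5P; split.
    + by rewrite hm_val // eqxx.
    + apply/forallP => i; apply/implyP => hi; rewrite hm_val //.
      rewrite (_ : (i == s) = false); last by apply/eqP => q; rewrite q ltnn in hi.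
      case Hi: (i \in E) => //; have := Hsub i Hi; lia.
    + by rewrite hm_val // eqxx.
    + apply/forallP => i; apply/implyP => hi; rewrite hm_val //.
      rewrite (_ : (i == s) = false); last by apply/eqP => q; rewrite q ltnn in hi.
      case Hi: (i \in E) => //=.
      by have := implyP (F i) Hi => /andP[_ /eqP ->]; case: (odd s).
    + by rewrite hm_cnt // Hb.
  - move=> m /andP[Hp /existsP[s /and5P[H1 /forallP H2 /eqP H3 /forallP H4 /eqP H5]]].
    have hj1 : j <= n by rewrite -H3 -ltnS; exact: ltn_ord.
    pose E := [set i : 'I_n | (s < i) && (m i != 0 :> nat)].
    have Hsub : forall i, i \in E -> s < i by move=> i; rewrite inE => /andP[].
    have em : m = hm j s E.
      apply/ffunP => i; apply: val_inj; rewrite /= hm_val // inE.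
      case: (ltngtP i s) => h.
      * rewrite (_ : (i == s) = false); last by apply/eqP => q; rewrite q ltnn in h.
        by rewrite /=; apply/eqP; exact: (implyP (H2 i) h).
      * rewrite (_ : (i == s) = false); last by apply/eqP => q; rewrite q ltnn in h.
        rewrite /=; have /andP[h1 _] := implyP (H4 i) h.
        by case: (m i : nat) h1 => [|[|]].
      * by rewrite (_ : i = s) ?eqxx //; apply: val_inj.
    exists (s, E) => //=.
    move: Hp H5; rewrite em /is_partition hm_sum // hm_cnt // => /eqP Hp Hb.
    rewrite /Pb Hb Hp !eqxx !andbT.
    apply/forallP => i; apply/implyP => Hi; rewrite Hsub //=.
    move: Hi; rewrite inE => /andP[hi mi]; have /andP[_ h] := implyP (H4 i) hi.
    move: (implyP h mi); rewrite !oddS.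
    by case: (odd i); case: (odd s).
rewrite -sum1_card; symmetry.
rewrite (eq_bigr (fun s : 'I_n => \sum_(E in [pred E : {set 'I_n} | Pb (~~ odd s) s (j * s.+1) n b E]) 1)); last by move=> s _; rewrite G_def sum1_card.
rewrite pair_big_dep /=; apply: eq_bigl => q; by rewrite !inE.
Qed.

Definition fs N (E : {set 'I_N}) : mult N := [ffun i => inord (i \in E : nat)].

Lemma fs_val N E i : (@fs N E i : nat) = (i \in E).
Proof. by rewrite ffunE inordK //; case: (i \in E) => //=; have := ltn_ord i; lia. Qed.

Lemma fs_sum N (E : {set 'I_N}) : \sum_(i < N) i.+1 * fs E i = \sum_(i in E) i.+1.
Proof.
rewrite [RHS]big_mkcond; apply: eq_bigr => i _; rewrite fs_val.
by case: (i \in E); rewrite ?muln1 ?muln0.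
Qed.

Lemma pde_rep N : pde_nat N = G N true 0 0 N false + G N true 0 0 N true.
Proof.
rewrite !G_def.
have -> : #|[pred E : {set 'I_N} | Pb true 0 0 N false E]| + #|[pred E : {set 'I_N} | Pb true 0 0 N true E]|
   = #|[pred E : {set 'I_N} | [forall i in E, (0 < i) && (odd i == true)] && (0 + \sum_(i in E) i.+1 == N)]|.
  rewrite -[X in _ = X](cardID [pred E : {set 'I_N} | odd #|E|]) addnC; congr addn; apply: eq_card => E;
  by rewrite !inE /Pb; case: (odd #|E|) => /=; rewrite ?andbT ?andbF.
rewrite /pde_nat; symmetry.
apply: (@bij_card _ _ _ _ (@fs N)).
- move=> E1 E2 _ _ e; apply/setP => i.
  by have := congr1 (fun m : mult N => (m i : nat)) e; rewrite /= !fs_val; case: (i \in E1); case: (i \in E2).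
- move=> E /andP[/forallP F /eqP S]; apply/andP; split.
    by rewrite /is_partition fs_sum; move: S; rewrite add0n => ->.
  apply/forallP => i; rewrite fs_val; case Hi: (i \in E) => //=.
  by have := implyP (F i) Hi => /andP[_ /eqP ->].
- move=> m /andP[Hp /forallP H].
  pose E := [set i : 'I_N | m i != 0 :> nat].
  have em : m = fs E.
    apply/ffunP => i; apply: val_inj; rewrite /= fs_val inE.
    have /andP[h1 _] := H i; by case: (m i : nat) h1 => [|[|]].
  exists E => //.
  move: Hp; rewrite em /is_partition fs_sum => /eqP ->; rewrite eqxx andbT.
  apply/forallP => i; apply/implyP; rewrite inE => mi.
  have /andP[_ h] := H i; move: (implyP h mi); rewrite oddS negbK => oi.
  by rewrite oi andbT; case: (i : nat) oi.
Qed.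

Lemma Bnat_R b j n R : 0 < j -> n <= R ->
  Bnat b j n = \sum_(0 <= s < R) G n (~~ odd s) s (j * s.+1) n b.
Proof.
move=> hj hR; rewrite Bnat_rep // -(big_mkord xpredT (fun s => G n (~~ odd s) s (j * s.+1) n b)) [RHS](@big_cat_nat _ _ _ n) //=.
rewrite [X in _ = _ + X]big_nat_cond [X in _ = _ + X]big1 ?addn0 // => s /andP[/andP[h _] _].
apply: G_gt; nia.
Qed.

Lemma main_nat k t : 1 <= k -> 1 <= t ->
  Bnat false k.+1 (2*t+1) + Bnat true k (2*t)
  = Bnat true k (2*t - 2*k) + (if k <= 2*t then pde_nat (2*t-k) else 0).
Proof.
move=> hk ht.
set R := (2*t).+2.
rewrite (@Bnat_R _ _ _ R) // ?(@Bnat_R _ _ (2*t) R) // ?(@Bnat_R _ _ (2*t-2*k) R) //; try lia.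
set X0 := fun s => G (2*t+1) (~~ odd s) s (k.+1 * s.+1) (2*t+1) false.
set X1 := fun s => G (2*t) (~~ odd s) s (k * s.+1) (2*t) true.
set Y := fun s => G (2*t-2*k) (~~ odd s) s (k * s.+1) (2*t-2*k) true.
have oY : ~~ odd (2*t - 2*k) by rewrite -mulnBr oddM.
case hko: (odd k).
  have z0 : forall s, X0 s = 0.
    move=> s; apply: G_par; rewrite oddD !oddM /= hko; by case: (odd s); case: (odd t).
  have z1 : forall s, X1 s = 0.
    move=> s; apply: G_par; rewrite !oddM /= hko; by case: (odd s); case: (odd t).
  have zY : forall s, Y s = 0.
    move=> s; apply: G_par; rewrite (negbTE oY) !oddM /= hko; by case: (odd s).
  rewrite big1 => [|s _]; last exact: z0.
  rewrite big1 => [|s _]; last exact: z1.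
  rewrite big1 => [|s _]; last exact: zY.
  case: ifP => h //; rewrite pde_rep !G_par //; rewrite oddB // oddM /= hko //.
rewrite -big_split /=.
have ext : \sum_(0 <= s < R) (X0 s + X1 s) = \sum_(0 <= s < R.+2) (X0 s + X1 s).
  have hRR : R <= R.+2 by lia.
  rewrite [RHS](@big_cat_nat _ _ _ R) //= [X in _ = _ + X]big_nat_cond.
  rewrite [X in _ = _ + X]big1 ?addn0 // => s /andP[/andP[h _] _].
  by rewrite /X0 /X1 !G_gt //; nia.
rewrite ext big_nat_recl // big_nat_recl //.
have -> : X0 1 = 0 by apply: G_par; rewrite oddD !oddM /= hko; case: (odd t).
have -> : X1 1 = 0 by apply: G_par; rewrite !oddM /= hko; case: (odd t).
rewrite addn0 addnC; congr addn.
  apply: eq_bigr => s _; case hs: (odd s).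
    by rewrite /X0 /X1 /Y !G_par //= ?(negbTE oY) ?oddD !oddM /= ?hko ?hs //; case: (odd t).
  case: (leqP k t) => hkt; last by rewrite /X0 /X1 /Y !G_gt //; nia.
  have e1 : X1 s.+2 = G (2*t-2*k) true s.+2 (k*s.+1) (2*t-2*k) true.
    rewrite /X1 /= hs /=.
    have -> : k * s.+3 = k * s.+1 + 2*k by nia.
    have E2 : 2*t = (2*t - 2*k) + 2*k by lia.
    rewrite [in X in G _ _ _ _ X _]E2 G_shift; apply: G_move; lia.
  have e0 : X0 s.+2 = G (2*t-2*k) true s.+2 (k*s.+1 + s.+2) (2*t-2*k) false.
    rewrite /X0 /= hs /=.
    have -> : k.+1 * s.+3 = (k * s.+1 + s.+2) + (2*k+1) by nia.
    have E2 : 2*t+1 = (2*t - 2*k) + (2*k+1) by lia.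
    rewrite [in X in G _ _ _ _ X _]E2 G_shift; apply: G_move; lia.
  by rewrite e0 e1 /= [RHS]G_step ?hs // addnC.
case: ifP => h; last by rewrite /X0 /X1 !G_gt //; lia.
rewrite pde_rep; congr addn.
  rewrite /X0 /=.
  have -> : k.+1 * 1 = 0 + k.+1 by lia.
  have E2 : 2*t+1 = (2*t - k) + k.+1 by lia.
  rewrite [in X in G _ _ _ _ X _]E2 G_shift; apply: G_move; lia.
rewrite /X1 /=.
have -> : k * 1 = 0 + k by lia.
have E2 : 2*t = (2*t - k) + k by lia.
rewrite [in X in G _ _ _ _ X _]E2 G_shift; apply: G_move; lia.
Qed.

End Aux.
Import Aux.

Theorem lemma1 (k t : nat) (hk : (1 <= k)%N) (ht : (1 <= t)%N) :
  (B0 k.+1 (2 * t + 1)%N%:Z + B1 k (2 * t)%N%:Z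
   = B1 k (2 * t%:Z - 2 * k%:Z)%R + pde (2 * t%:Z - k%:Z)%R)%N.
Proof.
have e0 : B0 k.+1 (2 * t + 1)%N%:Z = Bnat false k.+1 (2*t+1).
  by rewrite /B0; case: ifP => h //; lia.
have e1 : B1 k (2 * t)%N%:Z = Bnat true k (2*t).
  by rewrite /B1; case: ifP => h //; lia.
have e2 : B1 k (2 * t%:Z - 2 * k%:Z)%R = Bnat true k (2*t-2*k).
  rewrite /B1; case: ifP => h.
    have -> : (2*t - 2*k)%N = 0%N by lia.
    by rewrite Bnat_rep // big_ord0.
  have -> : (2 * t%:Z - 2 * k%:Z)%R = Posz (2*t-2*k) by lia.
  by [].
have e3 : pde (2 * t%:Z - k%:Z)%R = if (k <= 2*t)%N then pde_nat (2*t-k) else 0%N.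
  rewrite /pde; case: ifP => h.
    by case: ifP => h2 //; lia.
  case: ifP => h2; last lia.
  have -> : (2 * t%:Z - k%:Z)%R = Posz (2*t-k) by lia.
  by [].
by rewrite e0 e1 e2 e3; exact: main_nat.
Qed.
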